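(* Let $F>0$ and let $\{g_n\}_{n<0}$ be real numbers with $\liminf_{n\to-\infty}|n|^{-1/2}g_n>-\sqrt{F}$. Then for every $E\in\mathbb{R}$ there is a non-trivial $\psi\in L^2((-\infty,0))$ which solves $-\psi''(x)-Fx\psi(x)=E\psi(x)$ for $x\in(-\infty,0)\setminus\mathbb{Z}$, is continuous at every negative integer $n$, and satisfies $\lim_{\epsilon\to0^+}(\psi'(n+\epsilon)-\psi'(n-\epsilon))=g_n\psi(n)$ for every negative integer $n$. *)

(* Defs.v *)
From Stdlib Require Export Reals ZArith.
From Coquelicot Require Export Coquelicot.
Open Scope R_scope.

(* The sequence k |-> |n|^{-1/2} g_n with n = -(k+1), i.e. n -> -oo as k -> +oo. *)
Definition scaled_seq (g : Z -> R) (k : nat) : R :=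
  let n := (- (Z.of_nat k + 1))%Z in
  / sqrt (Rabs (IZR n)) * g n.

(* psi in L^2((-oo,0)): the (improper) integral of psi^2 over (-oo,0) exists.
   (psi is forced continuous on (-oo,0) by the other hypotheses, so for it this
   coincides with Lebesgue square-integrability.) *)
Definition L2_neg_halfline (psi : R -> R) : Prop :=
  ex_RInt_gen (fun x => psi x ^ 2) (Rbar_locally m_infty) (at_left 0).

Definition not_integer (x : R) : Prop := forall n : Z, x <> IZR n.

(* Main.v *)
Require Import Defs.
From Stdlib Require Import Reals ZArith.
From Coquelicot Require Import Coquelicot.
Open Scope R_scope.
From Stdlib Require Import Reals ZArith Lia Lra Psatz.
From Coquelicot Require Import Coquelicot.
Open Scope R_scope.

Fixpoint trip (E F y0 y1 : R) (n : nat) : R * R * R :=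
  match n with
  | O => (y0, y1, - E * y0 / 2)
  | S m => let '(a, b, c) := trip E F y0 y1 m in
           (b, c, - (E * b + F * a) / (INR (m + 3) * INR (m + 2)))
  end.
Definition cf E F y0 y1 (n : nat) : R := fst (fst (trip E F y0 y1 n)).

Lemma cf_rec E F y0 y1 n :
  cf E F y0 y1 (n + 3) =
  - (E * cf E F y0 y1 (n + 1) + F * cf E F y0 y1 n) / (INR (n + 3) * INR (n + 2)).
Proof.
  unfold cf. replace (n + 3)%nat with (S (S (S n))) by lia.
  replace (n + 1)%nat with (S n) by lia.
  cbn [trip]. destruct (trip E F y0 y1 n) as [[a b] c]. cbn [fst snd].
  replace (INR (S (S (S n)))) with (INR (n+3)) by (f_equal; lia). reflexivity.
Qed.

Lemma cf_bound E F y0 y1 (r : R) :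
  exists M, forall n, Rabs (cf E F y0 y1 n * r ^ n) <= M.
Proof.
  set (c := fun n => Rabs (cf E F y0 y1 n * r ^ n)).
  set (rho := Rabs r).
  set (A := Rabs E * rho ^ 2 + Rabs F * rho ^ 3).
  destruct (INR_unbounded A) as [K HK].
  assert (Hfin : forall N, exists M, 0 <= M /\ forall i, (i <= N)%nat -> c i <= M).
  { induction N as [|N [M [HM0 HM]]].
    - exists (c O). split. unfold c; apply Rabs_pos.
      intros i Hi. replace i with O by lia. lra.
    - exists (Rmax M (c (S N))). split. apply Rle_trans with M; auto. apply Rmax_l.
      intros i Hi. destruct (Nat.eq_dec i (S N)) as [->|Hne]. apply Rmax_r.
      apply Rle_trans with M. apply HM; lia. apply Rmax_l. }
  destruct (Hfin (K + 2)%nat) as [M [HM0 HM]].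
  exists M.
  assert (Hall : forall n, forall m, (m <= n)%nat -> c m <= M).
  { induction n as [|n IH].
    - intros m Hm. apply HM. lia.
    - intros m Hm. destruct (Nat.eq_dec m (S n)) as [->|Hne]; [|apply IH; lia].
      destruct (le_lt_dec (S n) (K + 2)) as [Hle|Hlt]. apply HM; lia.
      replace (S n) with ((n - 2) + 3)%nat by lia.
      set (p := (n - 2)%nat).
      assert (H1 : c (p + 1)%nat <= M) by (apply IH; unfold p; lia).
      assert (H0 : c p <= M) by (apply IH; unfold p; lia).
      assert (HpK : INR K <= INR p) by (apply le_INR; unfold p; lia).
      unfold c. rewrite cf_rec.
      assert (Hd : A <= INR (p + 3) * INR (p + 2)).
      { rewrite !plus_INR. simpl. assert (0 <= INR p) by apply pos_INR. nra. }
      assert (Hdp : 0 < INR (p + 3) * INR (p + 2)).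
      { apply Rmult_lt_0_compat; apply lt_0_INR; lia. }
      unfold c in H1, H0.
      rewrite Rabs_mult in H1, H0 |- *. rewrite <- !RPow_abs in H1, H0 |- *.
      fold rho in H1, H0 |- *.
      assert (Hr0 : 0 <= rho) by apply Rabs_pos.
      unfold Rdiv. rewrite Rabs_mult, Rabs_Ropp, Rabs_inv, (Rabs_right (_ * _)) by lra.
      assert (Htri : Rabs (E * cf E F y0 y1 (p + 1) + F * cf E F y0 y1 p) <=
                     Rabs E * Rabs (cf E F y0 y1 (p + 1)) + Rabs F * Rabs (cf E F y0 y1 p)).
      { rewrite <- !Rabs_mult. apply Rabs_triang. }
      replace (rho ^ (p + 3)) with (rho ^ (p + 1) * rho ^ 2)
        by (rewrite <- pow_add; f_equal; lia).
      assert (Hexp : rho ^ (p + 1) = rho ^ p * rho) by (rewrite pow_add; ring).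
      assert (Hp0 : 0 <= rho ^ p) by (apply pow_le; auto).
      assert (Hq : Rabs (E * cf E F y0 y1 (p + 1) + F * cf E F y0 y1 p) * rho ^ (p + 1) * rho ^ 2
                   <= A * M).
      { apply Rle_trans with ((Rabs E * Rabs (cf E F y0 y1 (p + 1)) + Rabs F * Rabs (cf E F y0 y1 p))
                                * rho ^ (p + 1) * rho ^ 2).
        apply Rmult_le_compat_r. apply pow_le; auto. apply Rmult_le_compat_r.
        apply pow_le; auto. auto.
        unfold A. rewrite Hexp in *.
        assert (0 <= Rabs E) by apply Rabs_pos. assert (0 <= Rabs F) by apply Rabs_pos.
        assert (0 <= Rabs (cf E F y0 y1 (p + 1))) by apply Rabs_pos.
        assert (0 <= Rabs (cf E F y0 y1 p)) by apply Rabs_pos.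
        assert (0 <= rho ^ 2) by (apply pow_le; auto).
        assert (0 <= rho ^ 3) by (apply pow_le; auto).
        replace ((Rabs E * Rabs (cf E F y0 y1 (p + 1)) + Rabs F * Rabs (cf E F y0 y1 p)) *
                 (rho ^ p * rho) * rho ^ 2)
          with (Rabs E * rho ^ 2 * (Rabs (cf E F y0 y1 (p + 1)) * (rho ^ p * rho)) +
                Rabs F * rho ^ 3 * (Rabs (cf E F y0 y1 p) * rho ^ p)) by (simpl; ring).
        apply Rle_trans with (Rabs E * rho ^ 2 * M + Rabs F * rho ^ 3 * M); [|lra].
        apply Rplus_le_compat; apply Rmult_le_compat_l; auto; nra. }
      assert (HA0 : 0 <= A).
      { unfold A. assert (0 <= Rabs E) by apply Rabs_pos. assert (0 <= Rabs F) by apply Rabs_pos.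
        assert (0 <= rho ^ 2) by (apply pow_le; auto).
        assert (0 <= rho ^ 3) by (apply pow_le; auto). nra. }
      set (X := Rabs (E * cf E F y0 y1 (p + 1) + F * cf E F y0 y1 p)) in *.
      set (D := INR (p + 3) * INR (p + 2)) in *.
      replace (X * / D * (rho ^ (p + 1) * rho ^ 2)) with ((X * rho ^ (p + 1) * rho ^ 2) / D)
        by (field; lra).
      apply Rmult_le_reg_r with D; auto. unfold Rdiv. rewrite Rmult_assoc, Rinv_l by lra.
      rewrite Rmult_1_r. nra. }
  intro n. apply (Hall n n). lia.
Qed.
Lemma cf_rad E F y0 y1 : CV_radius (cf E F y0 y1) = p_infty.
Proof.
  destruct (CV_radius_bounded (cf E F y0 y1)) as [Hub _].
  assert (H : forall r : R, Rbar_le r (CV_radius (cf E F y0 y1))).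
  { intro r. apply Hub. apply cf_bound. }
  destruct (CV_radius (cf E F y0 y1)) as [l| |] eqn:Heq; auto.
  - specialize (H (l + 1)). simpl in H. lra.
  - specialize (H 0). simpl in H. contradiction.
Qed.

Lemma inrad E F y0 y1 x : Rbar_lt (Rabs x) (CV_radius (cf E F y0 y1)).
Proof. rewrite cf_rad. exact I. Qed.

Lemma inrad' E F y0 y1 x : Rbar_lt (Rabs x) (CV_radius (PS_derive (cf E F y0 y1))).
Proof. rewrite CV_radius_derive, cf_rad. exact I. Qed.

Lemma cf_d1 E F y0 y1 x :
  is_derive (PSeries (cf E F y0 y1)) x (PSeries (PS_derive (cf E F y0 y1)) x).
Proof. apply is_derive_PSeries, inrad. Qed.

Lemma cf_d2 E F y0 y1 x :
  is_derive (PSeries (PS_derive (cf E F y0 y1))) x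
    (PSeries (PS_derive (PS_derive (cf E F y0 y1))) x).
Proof. apply is_derive_PSeries, inrad'. Qed.

Lemma cf_coef E F y0 y1 n :
  PS_derive (PS_derive (cf E F y0 y1)) n =
  PS_plus (PS_scal (- E) (cf E F y0 y1)) (PS_scal (- F) (PS_incr_1 (cf E F y0 y1))) n.
Proof.
  unfold PS_derive, PS_plus, PS_scal, PS_incr_1.
  unfold plus, scal; simpl. unfold mult; simpl.
  destruct n as [|m].
  - unfold cf, zero; simpl. field.
  - pose proof (cf_rec E F y0 y1 m) as H.
    replace (m + 3)%nat with (S (S (S m))) in H by lia.
    replace (m + 1)%nat with (S m) in H by lia.
    rewrite H. rewrite !plus_INR in *. rewrite !S_INR. simpl.
    assert (0 <= INR m) by apply pos_INR.
    field. lra.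
Qed.

Lemma cf_ode E F y0 y1 x :
  PSeries (PS_derive (PS_derive (cf E F y0 y1))) x = - (F * x + E) * PSeries (cf E F y0 y1) x.
Proof.
  rewrite (PSeries_ext _ _ x (cf_coef E F y0 y1)).
  rewrite PSeries_plus.
  - rewrite !PSeries_scal, PSeries_incr_1. ring.
  - apply ex_pseries_scal. apply Rmult_comm. apply CV_radius_inside, inrad.
  - apply ex_pseries_scal. apply Rmult_comm. apply ex_pseries_incr_1.
    apply CV_radius_inside, inrad.
Qed.

Lemma cf_at0 E F y0 y1 : PSeries (cf E F y0 y1) 0 = y0.
Proof. rewrite PSeries_0. reflexivity. Qed.

Lemma cf_d_at0 E F y0 y1 : PSeries (PS_derive (cf E F y0 y1)) 0 = y1.
Proof. rewrite PSeries_0. unfold PS_derive, cf. simpl. ring. Qed.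
Definition sol (F E : R) (f f1 : R -> R) :=
  forall x, is_derive f x (f1 x) /\ is_derive f1 x (- (F * x + E) * f x).

Lemma cf_sol F E y0 y1 :
  sol F E (PSeries (cf E F y0 y1)) (PSeries (PS_derive (cf E F y0 y1))).
Proof.
  intro x. split. apply cf_d1. rewrite <- cf_ode. apply cf_d2.
Qed.

Lemma sol_lin F E f f1 g g1 a b :
  sol F E f f1 -> sol F E g g1 ->
  sol F E (fun x => a * f x + b * g x) (fun x => a * f1 x + b * g1 x).
Proof.
  intros Hf Hg x. destruct (Hf x) as [H1 H2]. destruct (Hg x) as [H3 H4]. split.
  - apply (is_derive_plus (fun x => a * f x) (fun x => b * g x)).
    apply is_derive_scal; auto. apply is_derive_scal; auto.
  - evar (l : R). replace (- (F * x + E) * (a * f x + b * g x)) with l.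
    apply (is_derive_plus (fun x => a * f1 x) (fun x => b * g1 x)).
    apply is_derive_scal; apply H2. apply is_derive_scal; apply H4.
    unfold l. unfold plus, scal; simpl; unfold mult; simpl. ring.
Qed.

Lemma cont_of_der f f1 x : is_derive f x (f1 x) -> continuity_pt f x.
Proof.
  intro H. apply continuity_pt_filterlim. apply (@ex_derive_continuous R_AbsRing R_NormedModule f x). eexists; eauto.
Qed.

Lemma mono (h dh : R -> R) a b :
  (forall x, a <= x <= b -> is_derive h x (dh x)) ->
  (forall x, a <= x <= b -> 0 <= dh x) ->
  forall x y, a <= x -> x <= y -> y <= b -> h x <= h y.
Proof.
  intros Hd Hp x y Hx Hxy Hy.
  destruct (Req_dec x y) as [->|Hne]. lra.
  destruct (MVT_gen h x y dh) as [c [Hc Heq]].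
  - intros z Hz. rewrite Rmin_left, Rmax_right in Hz by lra. apply Hd. lra.
  - intros z Hz. rewrite Rmin_left, Rmax_right in Hz by lra. apply (cont_of_der h dh). apply Hd. lra.
  - rewrite Rmin_left, Rmax_right in Hc by lra.
    assert (0 <= dh c) by (apply Hp; lra). nra.
Qed.

Lemma pos_start F E f f1 a b :
  sol F E f f1 -> a <= b ->
  (forall x, a <= x <= b -> 0 <= - (F * x + E)) ->
  0 < f a -> 0 <= f1 a ->
  forall x, a <= x <= b -> 0 < f x /\ 0 <= f1 x.
Proof.
  intros Hs Hab Hq Hfa Hf1a.
  assert (Hh : forall x, a <= x <= b -> f a * f1 a <= f x * f1 x).
  { intros x Hx. apply (mono (fun x => f x * f1 x)
       (fun x => f1 x * f1 x + f x * (- (F * x + E) * f x)) a b); try lra.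
    - intros z Hz. destruct (Hs z) as [H1 H2].
      apply (is_derive_mult f f1 z (f1 z) _ H1 H2). intros; apply Rmult_comm.
    - intros z Hz. specialize (Hq z Hz). nra. }
  assert (Hsq : forall x, a <= x <= b -> f a * f a <= f x * f x).
  { intros x Hx. apply (mono (fun x => f x * f x) (fun x => f1 x * f x + f x * f1 x) a b); try lra.
    - intros z Hz. destruct (Hs z) as [H1 H2].
      apply (is_derive_mult f f z (f1 z) (f1 z) H1 H1). intros; apply Rmult_comm.
    - intros z Hz. specialize (Hh z Hz). nra. }
  assert (Hpos : forall x, a <= x <= b -> 0 < f x).
  { intros x Hx. destruct (Rlt_le_dec 0 (f x)) as [H|H]; auto. exfalso.
    assert (Hx2 := Hsq x Hx).
    assert (Hneg : f x < 0) by (destruct (Req_dec (f x) 0) as [H0|H0]; [rewrite H0 in Hx2; nra| lra]).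
    destruct (Ranalysis5.IVT_interv (fun t => - f t) a x) as [z [Hz Hz0]].
    + intros t Ht. apply continuity_pt_opp. apply (cont_of_der f f1). apply Hs.
    + destruct (Req_dec a x) as [->|]; [lra|lra].
    + lra.
    + lra.
    + assert (f z = 0) by lra. specialize (Hsq z ltac:(lra)). nra. }
  intros x Hx. split. apply Hpos; auto.
  specialize (Hh x Hx). specialize (Hpos x Hx). nra.
Qed.
Definition ch (t : R) := (exp t + exp (- t)) / 2.
Definition sh (t : R) := (exp t - exp (- t)) / 2.

Lemma ch_pos t : 0 < ch t.
Proof. unfold ch. assert (0 < exp t) by apply exp_pos. assert (0 < exp (-t)) by apply exp_pos. lra. Qed.

Lemma nonneg_piece F E f f1 k :
  sol F E f f1 ->
  (forall x, k <= x <= k + 1 -> 0 <= - (F * x + E)) ->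
  0 <= f k -> 0 <= f1 k -> (0 < f k \/ 0 < f1 k) ->
  (forall x, k <= x <= k + 1 -> 0 <= f x /\ 0 <= f1 x) /\ 0 < f (k + 1).
Proof.
  intros Hs Hq Hf Hf1 Hor.
  destruct (Rlt_le_dec 0 (f k)) as [Hfk|Hfk].
  - pose proof (pos_start F E f f1 k (k + 1) Hs ltac:(lra) Hq Hfk Hf1) as H.
    split. intros x Hx. destruct (H x Hx); split; lra. apply H; lra.
  - assert (Hf0 : f k = 0) by lra. destruct Hor as [Hor|Hor]; [lra|].
    assert (Hc : continuity_pt f1 k).
    { apply (cont_of_der f1 (fun x => - (F * x + E) * f x)). apply Hs. }
    destruct (Hc (f1 k) Hor) as [alp [Halp Hal]].
    set (d := Rmin (alp / 2) (1 / 2)).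
    assert (Hd0 : 0 < d) by (unfold d; apply Rmin_glb_lt; lra).
    assert (Hd1 : d <= 1 / 2) by apply Rmin_r.
    assert (Hd2 : d <= alp / 2) by apply Rmin_l.
    assert (Hf1p : forall y, k <= y <= k + d -> 0 < f1 y).
    { intros y Hy. destruct (Req_dec y k) as [->|Hne]; auto.
      assert (Hy2 := Hal y). simpl in Hy2. unfold R_dist in Hy2.
      assert (Rabs (f1 y - f1 k) < f1 k).
      { apply Hy2. split. unfold D_x, no_cond. split; auto. rewrite Rabs_right; lra. }
      apply Rabs_def2 in H. lra. }
    assert (Hmon : forall x y, k <= x -> x <= y -> y <= k + d -> f x <= f y).
    { apply (mono f f1 k (k + d)). intros z Hz; apply Hs. intros z Hz. left; apply Hf1p; lra. }
    assert (Hfd : 0 < f (k + d)).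
    { destruct (MVT_gen f k (k + d) f1) as [c [Hc1 Hc2]].
      - intros z Hz. apply Hs.
      - intros z Hz. apply (cont_of_der f f1). apply Hs.
      - rewrite Rmin_left, Rmax_right in Hc1 by lra.
        assert (0 < f1 c) by (apply Hf1p; lra). nra. }
    assert (Hd3 : forall x, k + d <= x <= k + 1 -> 0 <= - (F * x + E)) by (intros; apply Hq; lra).
    pose proof (pos_start F E f f1 (k + d) (k + 1) Hs ltac:(lra) Hd3 Hfd
                  ltac:(left; apply Hf1p; lra)) as H.
    split.
    + intros x Hx. destruct (Rle_dec x (k + d)) as [Hxd|Hxd].
      * split. rewrite <- Hf0. apply Hmon; lra. left; apply Hf1p; lra.
      * destruct (H x ltac:(lra)). split; lra.
    + apply H; lra.
Qed.

Lemma piece F E f f1 k s0 :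
  sol F E f f1 -> 0 < s0 ->
  (forall x, k <= x <= k + 1 -> s0 * s0 <= - (F * x + E)) ->
  0 <= f k -> 0 <= f1 k -> (0 < f k \/ 0 < f1 k) ->
  (forall x, k <= x <= k + 1 -> 0 <= f x /\ f x <= f (k + 1)) /\
  0 < f (k + 1) /\
  (1 + s0 * s0 / 2) * f k <= f (k + 1) /\
  s0 * sh s0 * f (k + 1) <= ch s0 * f1 (k + 1).
Proof.
  intros Hs Hs0 Hq Hf Hf1 Hor.
  assert (Hq0 : forall x, k <= x <= k + 1 -> 0 <= - (F * x + E)).
  { intros x Hx. specialize (Hq x Hx). nra. }
  destruct (nonneg_piece F E f f1 k Hs Hq0 Hf Hf1 Hor) as [Hnn Hpos].
  assert (Hmon : forall x y, k <= x -> x <= y -> y <= k + 1 -> f x <= f y).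
  { apply (mono f f1 k (k + 1)). intros z Hz; apply Hs. intros z Hz. apply Hnn; auto. }
  split; [|split; [exact Hpos|split]].
  - intros x Hx. split. apply Hnn; auto. apply Hmon; lra.
  -
    set (c := s0 * s0 * f k).
    assert (Hde : forall x y, k <= x -> x <= y -> y <= k + 1 ->
              f1 x - c * (x - k) <= f1 y - c * (y - k)).
    { apply (mono (fun x => f1 x - c * (x - k)) (fun x => - (F * x + E) * f x - c) k (k + 1)).
      - intros z Hz. destruct (Hs z) as [_ H2].
        evar (l : R). replace (- (F * z + E) * f z - c) with l.
        apply (is_derive_minus f1 (fun x => c * (x - k))). exact H2.
        auto_derive; auto. unfold l; unfold minus, plus, opp; simpl. field.
      - intros z Hz. specialize (Hq z Hz). assert (f k <= f z) by (apply Hmon; lra).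
        assert (0 <= f z) by (apply Hnn; auto). unfold c. nra. }
    assert (He : forall x y, k <= x -> x <= y -> y <= k + 1 ->
              f x - c * (x - k) ^ 2 / 2 <= f y - c * (y - k) ^ 2 / 2).
    { apply (mono (fun x => f x - c * (x - k) ^ 2 / 2) (fun x => f1 x - c * (x - k)) k (k + 1)).
      - intros z Hz. destruct (Hs z) as [H1 _].
        evar (l : R). replace (f1 z - c * (z - k)) with l.
        apply (is_derive_minus f (fun x => c * (x - k) ^ 2 / 2)). exact H1.
        auto_derive; auto. unfold l; unfold minus, plus, opp; simpl. field.
      - intros z Hz. specialize (Hde k z ltac:(lra) ltac:(lra) ltac:(lra)).
        replace (k - k) with 0 in Hde by ring. lra. }
    specialize (He k (k + 1) ltac:(lra) ltac:(lra) ltac:(lra)).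
    replace (k - k) with 0 in He by ring. replace (k + 1 - k) with 1 in He by ring.
    unfold c in He. lra.
  -
    set (phi := fun x => ch (s0 * (x - k))).
    set (dphi := fun x => s0 * sh (s0 * (x - k))).
    assert (Hphi : forall x, is_derive phi x (dphi x)).
    { intro x. unfold phi, dphi, ch, sh. auto_derive; auto. unfold Rminus; field. }
    assert (Hdphi : forall x, is_derive dphi x (s0 * s0 * phi x)).
    { intro x. unfold phi, dphi, ch, sh. auto_derive; auto. unfold Rminus; field. }
    assert (Hw : forall x y, k <= x -> x <= y -> y <= k + 1 ->
              f1 x * phi x - f x * dphi x <= f1 y * phi y - f y * dphi y).
    { apply (mono (fun x => f1 x * phi x - f x * dphi x)
                  (fun x => (- (F * x + E) - s0 * s0) * f x * phi x) k (k + 1)).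
      - intros z Hz. destruct (Hs z) as [H1 H2].
        evar (l : R). replace ((- (F * z + E) - s0 * s0) * f z * phi z) with l.
        apply (is_derive_minus (fun x => f1 x * phi x) (fun x => f x * dphi x)).
        apply (is_derive_mult f1 phi). exact H2. apply Hphi. intros; apply Rmult_comm.
        apply (is_derive_mult f dphi). exact H1. apply Hdphi. intros; apply Rmult_comm.
        unfold l; unfold minus, plus, opp, mult; simpl. ring.
      - intros z Hz. specialize (Hq z Hz). assert (0 <= f z) by (apply Hnn; auto).
        assert (0 < phi z) by apply ch_pos.
        apply Rmult_le_pos; [apply Rmult_le_pos|]; lra. }
    specialize (Hw k (k + 1) ltac:(lra) ltac:(lra) ltac:(lra)).
    unfold phi, dphi in Hw. replace (k - k) with 0 in Hw by ring.
    replace (k + 1 - k) with 1 in Hw by ring. rewrite !Rmult_0_r, !Rmult_1_r in Hw.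
    assert (Hch0 : ch 0 = 1) by (unfold ch; rewrite Ropp_0, exp_0; field).
    assert (Hsh0 : sh 0 = 0) by (unfold sh; rewrite Ropp_0, exp_0; field).
    rewrite Hch0, Hsh0 in Hw. lra.
Qed.
Lemma shch A S : 0 <= A <= S -> S + A <= (S - A) * (1 + 2 * S) -> A * ch S <= S * sh S.
Proof.
  intros [HA HS] H.
  unfold ch, sh. set (e := exp S). set (e' := exp (- S)).
  assert (Hee : e * e' = 1) by (unfold e, e'; rewrite <- exp_plus; replace (S + - S) with 0 by ring; apply exp_0).
  assert (He2 : 1 + 2 * S <= e * e) by (unfold e; rewrite <- exp_plus; replace (S + S) with (2 * S) by ring; apply exp_ineq1_le).
  assert (He : 0 < e) by apply exp_pos. assert (He' : 0 < e') by apply exp_pos.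
  assert (Hk : S + A <= (S - A) * (e * e)) by nra.
  apply Rmult_le_reg_l with (2 * e); [lra|].
  replace (2 * e * (A * ((e + e') / 2))) with (A * (e * e) + A * (e * e')) by field.
  replace (2 * e * (S * ((e - e') / 2))) with (S * (e * e) - S * (e * e')) by field.
  rewrite Hee. lra.
Qed.

Lemma liminf_ev (F : R) (u : nat -> R) :
  0 < F -> Rbar_lt (Finite (- sqrt F)) (LimInf_seq u) ->
  exists c, - sqrt F < c /\ exists N, forall n, (N <= n)%nat -> c < u n.
Proof.
  intros HF H. assert (HsF : 0 < sqrt F) by (apply sqrt_lt_R0; auto).
  unfold LimInf_seq in H. destruct (ex_LimInf_seq u) as [l Hl]. simpl in H.
  destruct l as [l| |]; simpl in *.
  - assert (Heps : 0 < (l + sqrt F) / 2) by lra.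
    destruct (Hl (mkposreal _ Heps)) as [_ [N HN]]. simpl in HN.
    exists (l - (l + sqrt F) / 2). split. lra. exists N. intros n Hn. apply HN; auto.
  - destruct (Hl 0) as [N HN]. exists 0. split. lra. exists N. auto.
  - contradiction.
Qed.

Lemma thresholds (F E : R) (g : Z -> R) :
  0 < F -> Rbar_lt (Finite (- sqrt F)) (LimInf_seq (fun k : nat =>
      / sqrt (Rabs (IZR (- (Z.of_nat k + 1)))) * g (- (Z.of_nat k + 1))%Z)) ->
  exists a b (N0 : nat), 0 < a < b /\ (1 <= N0)%nat /\
    forall m : nat, (N0 <= m)%nat ->
      - (a * sqrt (INR m)) <= g (- Z.of_nat m)%Z /\
      b * b * INR m <= F * INR m - E /\
      2 <= b * b * INR m /\
      a * sqrt (INR m) * ch (b * sqrt (INR m)) <= b * sqrt (INR m) * sh (b * sqrt (INR m)).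
Proof.
  intros HF Hlim.
  destruct (liminf_ev F _ HF Hlim) as [c [Hc [N1 HN1]]].
  set (sF := sqrt F). assert (HsF : 0 < sF) by (apply sqrt_lt_R0; auto).
  assert (HsF2 : sF * sF = F) by (apply sqrt_sqrt; lra).
  set (a := Rmax (- c) (sF / 2)).
  assert (Ha1 : - c <= a) by apply Rmax_l. assert (Ha2 : sF / 2 <= a) by apply Rmax_r.
  assert (Ha3 : a < sF) by (unfold a; apply Rmax_lub_lt; fold sF in Hc; lra).
  set (b := (a + sF) / 2).
  assert (Hb1 : a < b) by (unfold b; lra). assert (Hb2 : b < sF) by (unfold b; lra).
  assert (Hb0 : 0 < b) by lra.
  assert (HFb : 0 < F - b * b) by nra.
  set (X := 2 / (b * b) + Rabs E / (F - b * b) + (a / (b * (b - a))) ^ 2 + INR N1 + 1).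
  destruct (INR_unbounded X) as [N0 HN0].
  assert (HX1 : 0 <= 2 / (b * b)) by (apply Rdiv_le_0_compat; nra).
  assert (HX2 : 0 <= Rabs E / (F - b * b)) by (apply Rdiv_le_0_compat; [apply Rabs_pos|lra]).
  assert (HX3 : 0 <= (a / (b * (b - a))) ^ 2) by (apply pow2_ge_0).
  assert (HN1p : 0 <= INR N1) by apply pos_INR.
  exists a, b, N0. split. lra. split.
  { destruct N0. simpl in HN0. unfold X in HN0. lra. lia. }
  intros m Hm.
  assert (HmX : X < INR m) by (apply Rlt_le_trans with (INR N0); [lra| apply le_INR; auto]).
  unfold X in HmX.
  assert (Hm0 : 0 < INR m) by lra.
  set (r := sqrt (INR m)).
  assert (Hr0 : 0 < r) by (apply sqrt_lt_R0; auto).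
  assert (Hrr : r * r = INR m) by (apply sqrt_sqrt; lra).
  split; [|split; [|split]].
  -
    assert (HmN : (N1 <= m - 1)%nat).
    { assert (INR N1 < INR m) by lra. apply INR_lt in H. lia. }
    specialize (HN1 (m - 1)%nat HmN).
    replace (Z.of_nat (m - 1) + 1)%Z with (Z.of_nat m) in HN1
      by (rewrite Nat2Z.inj_sub by (apply INR_lt; simpl; lra); lia).
    rewrite opp_IZR, <- INR_IZR_INZ, Rabs_Ropp, Rabs_right in HN1 by lra.
    fold r in HN1.
    assert (Hc2 : c * r < g (- Z.of_nat m)%Z).
    { apply Rmult_lt_reg_l with (/ r). apply Rinv_0_lt_compat; auto.
      replace (/ r * (c * r)) with c by (field; lra). lra. }
    nra.
  - assert (E / (F - b * b) <= Rabs E / (F - b * b)).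
    { unfold Rdiv. apply Rmult_le_compat_r. left; apply Rinv_0_lt_compat; lra. apply Rle_abs. }
    assert (E / (F - b * b) <= INR m) by lra.
    apply Rmult_le_compat_r with (r := F - b * b) in H0; [|lra].
    replace (E / (F - b * b) * (F - b * b)) with E in H0 by (field; lra). nra.
  - assert (2 / (b * b) <= INR m) by lra.
    apply Rmult_le_compat_r with (r := b * b) in H; [|nra].
    replace (2 / (b * b) * (b * b)) with 2 in H by (field; lra). lra.
  - apply shch. split. nra. nra.
    assert (Hra : a / (b * (b - a)) <= r).
    { apply Rsqr_incr_0_var. unfold Rsqr. rewrite Hrr.
      replace ((a / (b * (b - a))) * (a / (b * (b - a)))) with ((a / (b * (b - a))) ^ 2) by ring.
      lra. lra. }
    assert (Hra2 : a <= r * (b * (b - a))).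
    { apply Rmult_le_compat_r with (r := b * (b - a)) in Hra; [|nra].
      replace (a / (b * (b - a)) * (b * (b - a))) with a in Hra by (field; nra). lra. }
    nra.
Qed.
Definition uu F E := PSeries (cf E F 1 0).
Definition uu1 F E := PSeries (PS_derive (cf E F 1 0)).
Definition vv F E := PSeries (cf E F 0 1).
Definition vv1 F E := PSeries (PS_derive (cf E F 0 1)).

Lemma uu_sol F E : sol F E (uu F E) (uu1 F E).
Proof. apply cf_sol. Qed.
Lemma vv_sol F E : sol F E (vv F E) (vv1 F E).
Proof. apply cf_sol. Qed.

Lemma wr F E x : uu F E x * vv1 F E x - uu1 F E x * vv F E x = 1.
Proof.
  set (W := fun x => uu F E x * vv1 F E x - uu1 F E x * vv F E x).
  assert (HW0 : W 0 = 1).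
  { unfold W, uu, uu1, vv, vv1. rewrite !cf_at0, !cf_d_at0. ring. }
  assert (Hd : forall z, is_derive W z 0).
  { intro z. destruct (uu_sol F E z) as [H1 H2]. destruct (vv_sol F E z) as [H3 H4].
    unfold W. evar (l : R). replace 0 with l.
    apply (is_derive_minus (fun x => uu F E x * vv1 F E x) (fun x => uu1 F E x * vv F E x)).
    apply (is_derive_mult (uu F E) (vv1 F E) z _ _ H1 H4). intros; apply Rmult_comm.
    apply (is_derive_mult (uu1 F E) (vv F E) z _ _ H2 H3). intros; apply Rmult_comm.
    unfold l, minus, plus, opp, mult; simpl. ring. }
  change (W x = 1). rewrite <- HW0.
  destruct (MVT_gen W 0 x (fun _ => 0)) as [c [_ Hc]].
  - intros; apply Hd.
  - intros z _. apply (cont_of_der W (fun _ => 0)). apply Hd.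
  - lra.
Qed.

Definition tr F E (t gt : R) (p : R * R) : R * R :=
  let val := fst p * uu F E t + snd p * vv F E t in
  let der := fst p * uu1 F E t + snd p * vv1 F E t - gt * val in
  (vv1 F E t * val - vv F E t * der, - uu1 F E t * val + uu F E t * der).

Fixpoint Cs F E (g : Z -> R) (c : R * R) (j : nat) : R * R :=
  match j with
  | O => c
  | S j' => tr F E (- INR (S j')) (g (- Z.of_nat (S j'))%Z) (Cs F E g c j')
  end.

Definition Pc F E g c j x := fst (Cs F E g c j) * uu F E x + snd (Cs F E g c j) * vv F E x.
Definition P1c F E g c j x := fst (Cs F E g c j) * uu1 F E x + snd (Cs F E g c j) * vv1 F E x.

Lemma Pc_sol F E g c j : sol F E (Pc F E g c j) (P1c F E g c j).
Proof. apply sol_lin; [apply uu_sol | apply vv_sol]. Qed.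

Lemma junction F E g c j :
  let t := - INR (S j) in
  Pc F E g c (S j) t = Pc F E g c j t /\
  P1c F E g c j t - P1c F E g c (S j) t = g (- Z.of_nat (S j))%Z * Pc F E g c (S j) t.
Proof.
  intro t. unfold Pc, P1c. cbn [Cs]. fold t. unfold tr.
  destruct (Cs F E g c j) as [p1 p2]. cbn [fst snd].
  pose proof (wr F E t) as HW.
  set (U := uu F E t) in *. set (U1 := uu1 F E t) in *.
  set (V := vv F E t) in *. set (V1 := vv1 F E t) in *.
  set (G := g (- Z.of_nat (S j))%Z).
  split.
  - transitivity ((p1 * U + p2 * V) * (U * V1 - U1 * V)). ring. rewrite HW. ring.
  - transitivity (G * (p1 * U + p2 * V) * (U * V1 - U1 * V) + (p1 * U1 + p2 * V1) * (1 - (U * V1 - U1 * V))). ring.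
    transitivity (G * ((p1 * U + p2 * V) * (U * V1 - U1 * V))). rewrite HW; ring. ring.
Qed.

Definition Rd F E g c j := (Pc F E g c j (- (INR j + 1)), P1c F E g c j (- (INR j + 1))).

Definition lc (x y : R) (p q : R * R) := (x * fst p + y * fst q, x * snd p + y * snd q).
Definition det2 (p q : R * R) := fst p * snd q - snd p * fst q.

Lemma Cs_lin F E g x y p q j : Cs F E g (lc x y p q) j = lc x y (Cs F E g p j) (Cs F E g q j).
Proof.
  induction j as [|j IH]. reflexivity.
  cbn [Cs]. rewrite IH. unfold tr, lc. destruct (Cs F E g p j), (Cs F E g q j). cbn [fst snd].
  f_equal; ring.
Qed.

Lemma Rd_lin F E g x y p q j : Rd F E g (lc x y p q) j = lc x y (Rd F E g p j) (Rd F E g q j).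
Proof.
  unfold Rd, Pc, P1c. rewrite Cs_lin. unfold lc. destruct (Cs F E g p j), (Cs F E g q j).
  cbn [fst snd]. f_equal; ring.
Qed.

Lemma Cs_det F E g p q j : det2 (Cs F E g p j) (Cs F E g q j) = det2 p q.
Proof.
  induction j as [|j IH]. reflexivity.
  cbn [Cs]. rewrite <- IH. set (t := - INR (S j)).
  pose proof (wr F E t) as HW. unfold tr, det2.
  destruct (Cs F E g p j) as [a1 a2], (Cs F E g q j) as [b1 b2]. cbn [fst snd].
  set (U := uu F E t) in *. set (U1 := uu1 F E t) in *.
  set (V := vv F E t) in *. set (V1 := vv1 F E t) in *.
  transitivity ((U * V1 - U1 * V) * (U * V1 - U1 * V) * (a1 * b2 - a2 * b1)). ring.
  rewrite HW. ring.
Qed.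

Lemma Rd_det F E g p q j : det2 (Rd F E g p j) (Rd F E g q j) = det2 p q.
Proof.
  rewrite <- (Cs_det F E g p q j). unfold Rd, Pc, P1c, det2.
  destruct (Cs F E g p j) as [a1 a2], (Cs F E g q j) as [b1 b2]. cbn [fst snd].
  set (t := - (INR j + 1)). pose proof (wr F E t) as HW.
  set (U := uu F E t) in *. set (U1 := uu1 F E t) in *.
  set (V := vv F E t) in *. set (V1 := vv1 F E t) in *.
  transitivity ((U * V1 - U1 * V) * (a1 * b2 - a2 * b1)). ring. rewrite HW. ring.
Qed.
From Stdlib Require Import FunctionalExtensionality Classical.
Definition inK (p : R * R) := 0 <= fst p /\ 0 <= snd p.
Definition nz (p : R * R) := 0 < fst p \/ 0 < snd p.

Lemma lim_affine (rho : nat -> R) (l al be : R) (n0 : nat) :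
  Un_cv rho l -> (forall n, (n0 <= n)%nat -> 0 <= al + rho n * be) -> 0 <= al + l * be.
Proof.
  intros Hcv Hp. rewrite Rmult_comm. destruct (Rle_lt_dec 0 (al + be * l)) as [H|H]; auto. exfalso.
  set (eps := - (al + be * l) / (Rabs be + 1)).
  assert (Heps : 0 < eps) by (unfold eps; apply Rdiv_lt_0_compat; [lra| pose proof (Rabs_pos be); lra]).
  destruct (Hcv eps Heps) as [N HN].
  specialize (HN (Nat.max N n0) (Nat.le_max_l _ _)). unfold R_dist in HN.
  specialize (Hp (Nat.max N n0) (Nat.le_max_r _ _)).
  set (z := rho (Nat.max N n0)) in *.
  assert (Hb : Rabs (be * (z - l)) <= Rabs be * eps).
  { rewrite Rabs_mult. apply Rmult_le_compat_l. apply Rabs_pos. lra. }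
  assert (Hb2 : Rabs be * eps < - (al + be * l)).
  { unfold eps. apply Rmult_lt_reg_r with (Rabs be + 1). pose proof (Rabs_pos be); lra.
    replace (Rabs be * (- (al + be * l) / (Rabs be + 1)) * (Rabs be + 1)) with
      (Rabs be * (- (al + be * l))) by (field; pose proof (Rabs_pos be); lra).
    pose proof (Rabs_pos be). nra. }
  assert (Hx := Rle_abs (be * (z - l))). nra.
Qed.



Lemma selection (Y : R * R -> nat -> R * R) (s : nat) :
  (forall y j, Y y j = lc (fst y) (snd y) (Y (1, 0) j) (Y (0, 1) j)) ->
  (forall j, det2 (Y (1, 0) j) (Y (0, 1) j) = 1) ->
  (forall y, Y y s = y) ->
  (forall y j, (s <= j)%nat -> inK (Y y (S j)) -> nz (Y y (S j)) ->
        0 < fst (Y y j) /\ 0 <= snd (Y y j)) ->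
  exists r, forall j, (s <= j)%nat -> inK (Y (1, r) j) /\ nz (Y (1, r) j).
Proof.
  intros HL HD HS HI.
  set (c1 := fun j => Y (1, 0) j). set (c2 := fun j => Y (0, 1) j).
  assert (Hscal : forall y j (t : R), Y (t * fst y, t * snd y) j =
                   (t * fst (Y y j), t * snd (Y y j))).
  { intros y j t. rewrite (HL (t * fst y, t * snd y)), (HL y). unfold lc. cbn [fst snd].
    f_equal; ring. }
  assert (Hchain : forall d y N, inK (Y y N) -> nz (Y y N) -> (d <= N - s)%nat ->
             inK (Y y (N - d)%nat) /\ nz (Y y (N - d)%nat) /\ ((0 < d)%nat -> 0 < fst (Y y (N - d)%nat))).
  { induction d as [|d IH]; intros y N HK Hn Hd.
    - replace (N - 0)%nat with N by lia. split; auto. split; auto. intro; lia.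
    - destruct (IH y N HK Hn ltac:(lia)) as [HK' [Hn' _]].
      replace (N - d)%nat with (S (N - S d)) in HK', Hn' by lia.
      destruct (HI y (N - S d)%nat ltac:(lia) HK' Hn') as [H1 H2].
      split. split; lra. split. left; auto. intros; auto. }
  set (yN := fun N => (- fst (c2 N), fst (c1 N))).
  assert (HyN : forall N, Y (yN N) N = (0, 1)).
  { intro N. rewrite HL. unfold yN, lc. cbn [fst snd]. pose proof (HD N) as H. unfold det2 in H.
    fold (c1 N) (c2 N) in H |- *. f_equal; lra. }
  assert (HyNK : forall N, (S s <= N)%nat -> forall j, (s <= j <= N)%nat ->
             inK (Y (yN N) j) /\ ((j < N)%nat -> 0 < fst (Y (yN N) j))).
  { intros N HN j Hj. assert (H01 : inK (Y (yN N) N) /\ nz (Y (yN N) N)).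
    { rewrite HyN. unfold inK, nz. simpl. lra. }
    destruct H01 as [HK Hn].
    destruct (Hchain (N - j)%nat (yN N) N HK Hn ltac:(lia)) as [A [_ C]].
    replace (N - (N - j))%nat with j in A, C by lia. split; auto. intro; apply C; lia. }
  assert (Hpos : forall N, (S s <= N)%nat -> 0 < fst (yN N) /\ 0 <= snd (yN N)).
  { intros N HN. destruct (HyNK N HN s ltac:(lia)) as [[_ H2] H3].
    rewrite HS in H2, H3. split; [apply H3; lia | exact H2]. }
  set (r := fun N => snd (yN N) / fst (yN N)).
  assert (Hr0 : forall N, (S s <= N)%nat -> 0 <= r N).
  { intros N HN. destruct (Hpos N HN). unfold r. apply Rdiv_le_0_compat; lra. }
  assert (H1r : forall N, (S s <= N)%nat -> Y (1, r N) = fun j => (/ fst (yN N) * fst (Y (yN N) j), / fst (yN N) * snd (Y (yN N) j))).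
  { intros N HN. destruct (Hpos N HN) as [Hp _]. apply functional_extensionality. intro j.
    rewrite <- Hscal. f_equal. f_equal; unfold r; field; lra. }
  assert (HKr : forall M j, (S s <= M)%nat -> (s <= j <= M)%nat -> inK (Y (1, r M) j)).
  { intros M j HM Hj. rewrite (H1r M HM). destruct (HyNK M HM j Hj) as [[A B] _].
    destruct (Hpos M HM) as [Hp _]. unfold inK. cbn [fst snd].
    assert (0 < / fst (yN M)) by (apply Rinv_0_lt_compat; auto). split; nra. }
  assert (Hmono : forall M N, (S s <= N)%nat -> (N <= M)%nat -> r M <= r N).
  { intros M N HN HNM. destruct (HKr M N ltac:(lia) ltac:(lia)) as [HK _].
    rewrite HL in HK. unfold lc in HK. cbn [fst snd] in HK.
    destruct (Hpos N HN) as [Hp _]. unfold yN in Hp. cbn [fst] in Hp. fold (c1 N) (c2 N) in HK.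
    assert (Hr : r N = fst (c1 N) / (- fst (c2 N))) by reflexivity.
    rewrite Hr. apply Rmult_le_reg_r with (- fst (c2 N)). lra.
    unfold Rdiv. rewrite Rmult_assoc, Rinv_l, Rmult_1_r by lra. lra. }
  set (rho := fun n => r (S s + n)%nat).
  destruct (decreasing_cv rho) as [rs Hrs].
  { intro n. unfold rho. apply Hmono; lia. }
  { exists 0. intro x. intros [n ->]. unfold rho, opp_seq. assert (0 <= r (S s + n)%nat) by (apply Hr0; lia). lra. }
  exists rs. intros j Hj.
  assert (HK : inK (Y (1, rs) j)).
  { rewrite HL. unfold lc, inK. cbn [fst snd]. rewrite !Rmult_1_l. split.
    - apply (lim_affine rho rs _ _ j Hrs). intros n Hn.
      pose proof (HKr (S s + n)%nat j ltac:(lia) ltac:(lia)) as [A _].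
      rewrite HL in A. unfold lc in A. cbn [fst snd] in A. rewrite Rmult_1_l in A. exact A.
    - apply (lim_affine rho rs _ _ j Hrs). intros n Hn.
      pose proof (HKr (S s + n)%nat j ltac:(lia) ltac:(lia)) as [_ A].
      rewrite HL in A. unfold lc in A. cbn [fst snd] in A. rewrite Rmult_1_l in A. exact A. }
  split; auto.
  assert (Hdet : det2 (Y (1, rs) j) (Y (0, 1) j) = 1).
  { rewrite HL. pose proof (HD j) as H. unfold det2, lc in *. cbn [fst snd]. nra. }
  destruct HK as [A B]. unfold nz.
  destruct (Req_dec (fst (Y (1, rs) j)) 0) as [H0|H0].
  - right. destruct (Req_dec (snd (Y (1, rs) j)) 0) as [H1|H1].
    + unfold det2 in Hdet. rewrite H0, H1 in Hdet. lra.
    + lra.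
  - left; lra.
Qed.
Lemma inv_step F E g a b N0 c j :
  0 < F -> 0 < a < b ->
  (forall m : nat, (N0 <= m)%nat ->
      - (a * sqrt (INR m)) <= g (- Z.of_nat m)%Z /\
      b * b * INR m <= F * INR m - E /\
      2 <= b * b * INR m /\
      a * sqrt (INR m) * ch (b * sqrt (INR m)) <= b * sqrt (INR m) * sh (b * sqrt (INR m))) ->
  (N0 <= S j)%nat ->
  inK (Rd F E g c (S j)) -> nz (Rd F E g c (S j)) ->
  0 < fst (Rd F E g c j) /\ 0 <= snd (Rd F E g c j) /\
  2 * fst (Rd F E g c (S j)) <= fst (Rd F E g c j) /\
  (forall x, - (INR (S j) + 1) <= x <= - (INR (S j) + 1) + 1 ->
      0 <= Pc F E g c (S j) x <= fst (Rd F E g c j)).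
Proof.
  intros HF Hab Hth Hj HK Hn.
  destruct (Hth (S j) Hj) as [Hg [Hq [H2 Hsh]]].
  set (m := INR (S j)) in *.
  assert (Hm0 : 0 < m) by (unfold m; apply lt_0_INR; lia).
  set (r := sqrt m) in *.
  assert (Hr0 : 0 < r) by (apply sqrt_lt_R0; auto).
  assert (Hrr : r * r = m) by (apply sqrt_sqrt; lra).
  set (s0 := b * r).
  set (k := - (m + 1)).
  assert (Hs0 : 0 < s0) by (unfold s0; nra).
  assert (Hqq : forall x, k <= x <= k + 1 -> s0 * s0 <= - (F * x + E)).
  { intros x Hx. unfold s0. replace (b * r * (b * r)) with (b * b * (r * r)) by ring.
    rewrite Hrr. unfold k in Hx. nra. }
  unfold inK, nz, Rd in HK, Hn. cbn [fst snd] in HK, Hn. fold m k in HK, Hn.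
  destruct HK as [HK1 HK2].
  destruct (piece F E (Pc F E g c (S j)) (P1c F E g c (S j)) k s0 (Pc_sol F E g c (S j))
              Hs0 Hqq HK1 HK2 Hn) as [Hb [Hp [Hdec Hw]]].
  assert (Hk1 : k + 1 = - INR (S j)) by (unfold k, m; ring).
  destruct (junction F E g c j) as [J1 J2]. cbv zeta in J1, J2.
  assert (HRj : Rd F E g c j = (Pc F E g c (S j) (k + 1),
                                 P1c F E g c (S j) (k + 1) + g (- Z.of_nat (S j))%Z * Pc F E g c (S j) (k + 1))).
  { unfold Rd. rewrite Hk1. replace (- (INR j + 1)) with (- INR (S j)) by (rewrite S_INR; ring).
    f_equal. auto. lra. }
  rewrite HRj. cbn [fst snd].
  set (f := Pc F E g c (S j) (k + 1)) in *. set (f1 := P1c F E g c (S j) (k + 1)) in *.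
  set (G := g (- Z.of_nat (S j))%Z) in *.
  assert (Hch : 0 < ch s0) by apply ch_pos.
  assert (Hf1 : a * r * f <= f1).
  { apply Rmult_le_reg_l with (ch s0); auto.
    assert (a * r * ch s0 * f <= s0 * sh s0 * f).
    { apply Rmult_le_compat_r. lra. unfold s0. exact Hsh. }
    nra. }
  split; [exact Hp|split; [nra|split]].
  - assert (1 + s0 * s0 / 2 >= 2) by (unfold s0; replace (b * r * (b * r)) with (b * b * (r * r)) by ring; rewrite Hrr; lra).
    unfold Rd. cbn [fst]. fold m k. nra.
  - intros x Hx. apply Hb. exact Hx.
Qed.

Lemma Rd_decomp F E g p j : Rd F E g p j = lc (fst p) (snd p) (Rd F E g (1, 0) j) (Rd F E g (0, 1) j).
Proof.
  rewrite <- Rd_lin. f_equal. destruct p. unfold lc. cbn [fst snd]. f_equal; ring.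
Qed.

Lemma construct F E g :
  0 < F -> Rbar_lt (Finite (- sqrt F)) (LimInf_seq (fun k : nat =>
      / sqrt (Rabs (IZR (- (Z.of_nat k + 1)))) * g (- (Z.of_nat k + 1))%Z)) ->
  exists c s,
    Pc F E g c (S s) (- INR (S s)) = 1 /\
    forall j, (S s <= j)%nat -> forall x, - (INR j + 1) <= x <= - INR j ->
      0 <= Pc F E g c j x <= (1 / 2) ^ (j - S s).
Proof.
  intros HF Hg.
  destruct (thresholds F E g HF Hg) as [a [b [N0 [Hab [HN0 Hth]]]]].
  set (s := (N0 - 1)%nat). assert (HsN : N0 = S s) by (unfold s; lia).
  set (A := Rd F E g (1, 0) s). set (B := Rd F E g (0, 1) s).
  assert (HAB : det2 A B = 1) by (unfold A, B; rewrite Rd_det; unfold det2; simpl; ring).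
  set (p := (snd B, - snd A)). set (q := (- fst B, fst A)).
  set (cy := fun y : R * R => lc (fst y) (snd y) p q).
  set (Y := fun y j => Rd F E g (cy y) j).
  assert (HL : forall y j, Y y j = lc (fst y) (snd y) (Y (1, 0) j) (Y (0, 1) j)).
  { intros y j. unfold Y, cy. rewrite !Rd_lin. unfold lc. cbn [fst snd]. f_equal; ring. }
  assert (HD : forall j, det2 (Y (1, 0) j) (Y (0, 1) j) = 1).
  { intro j. unfold Y. rewrite Rd_det. unfold cy, lc, p, q, det2 in *. cbn [fst snd] in *. nra. }
  assert (HS : forall y, Y y s = y).
  { intro y. unfold Y, cy. rewrite Rd_lin. rewrite (Rd_decomp F E g p), (Rd_decomp F E g q).
    fold A B. unfold p, q, lc, det2 in *. destruct y. cbn [fst snd] in *. f_equal.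
    - transitivity (r * (fst A * snd B - snd A * fst B)). ring. rewrite HAB; ring.
    - transitivity (r0 * (fst A * snd B - snd A * fst B)). ring. rewrite HAB; ring. }
  assert (HI : forall y j, (s <= j)%nat -> inK (Y y (S j)) -> nz (Y y (S j)) ->
        0 < fst (Y y j) /\ 0 <= snd (Y y j)).
  { intros y j Hj HK Hn. unfold Y in *.
    destruct (inv_step F E g a b N0 (cy y) j HF Hab Hth ltac:(lia) HK Hn) as [H1 [H2 _]]. auto. }
  destruct (selection Y s HL HD HS HI) as [r Hr].
  set (c := cy (1, r)).
  exists c, s.
  set (V := fun j => fst (Rd F E g c j)).
  assert (HVs : V s = 1) by (unfold V, c; fold (Y (1, r) s); rewrite HS; reflexivity).
  assert (Hstep : forall j, (s <= j)%nat -> 0 < V j /\ 2 * V (S j) <= V j /\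
            (forall x, - (INR (S j) + 1) <= x <= - (INR (S j) + 1) + 1 ->
               0 <= Pc F E g c (S j) x <= V j)).
  { intros j Hj. destruct (Hr (S j) ltac:(lia)) as [HK Hn].
    destruct (inv_step F E g a b N0 c j HF Hab Hth ltac:(lia) HK Hn) as [H1 [_ [H3 H4]]].
    unfold V. auto. }
  assert (HV : forall i, V (s + i)%nat <= (1 / 2) ^ i).
  { induction i as [|i IH]. rewrite Nat.add_0_r, HVs. simpl; lra.
    destruct (Hstep (s + i)%nat ltac:(lia)) as [_ [H2 _]].
    replace (s + S i)%nat with (S (s + i)) by lia. simpl. lra. }
  split.
  - destruct (junction F E g c s) as [J1 _]. cbv zeta in J1. rewrite J1.
    rewrite <- HVs. unfold V, Rd. cbn [fst]. replace (- (INR s + 1)) with (- INR (S s)) by (rewrite S_INR; ring). reflexivity.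
  - intros j Hj x Hx. destruct j as [|j']. lia.
    destruct (Hstep j' ltac:(lia)) as [_ [_ H3]].
    destruct (H3 x ltac:(rewrite S_INR in *; lra)) as [H4 H5]. split; auto.
    replace (S j' - S s)%nat with (j' - s)%nat by lia.
    specialize (HV (j' - s)%nat). replace (s + (j' - s))%nat with j' in HV by lia. lra.
Qed.
Definition psiP (P : nat -> R -> R) (x : R) := P (Z.to_nat (- up x)) x.

Lemma idx_spec j x : - (INR j + 1) <= x < - INR j -> Z.to_nat (- up x) = j.
Proof.
  intro H. assert (Hu : up x = (- Z.of_nat j)%Z).
  { symmetry. apply tech_up; rewrite opp_IZR, <- INR_IZR_INZ; lra. }
  rewrite Hu, Z.opp_involutive. apply Nat2Z.id.
Qed.

Lemma idx_ex x : x < 0 -> exists j, - (INR j + 1) <= x < - INR j.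
Proof.
  intro Hx. destruct (archimed x) as [H1 H2].
  assert (Hup : (up x <= 0)%Z).
  { assert (IZR (up x) < 1) by lra. apply lt_IZR in H. lia. }
  exists (Z.to_nat (- up x)).
  rewrite INR_IZR_INZ, Z2Nat.id by lia. rewrite opp_IZR. lra.
Qed.

Lemma loc_int j x : - (INR j + 1) < x < - INR j ->
  locally x (fun t => - (INR j + 1) < t < - INR j).
Proof.
  intro H. assert (Hd : 0 < Rmin (x + (INR j + 1)) (- INR j - x)) by (apply Rmin_glb_lt; lra).
  exists (mkposreal _ Hd). intros t Ht. simpl in Ht.
  unfold ball in Ht; simpl in Ht; unfold AbsRing_ball, abs, minus, plus, opp in Ht; simpl in Ht.
  apply Rabs_def2 in Ht.
  assert (Rmin (x + (INR j + 1)) (- INR j - x) <= x + (INR j + 1)) by apply Rmin_l.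
  assert (Rmin (x + (INR j + 1)) (- INR j - x) <= - INR j - x) by apply Rmin_r.
  lra.
Qed.

Lemma loc_eq P j x : - (INR j + 1) < x < - INR j -> locally x (fun t => P j t = psiP P t).
Proof.
  intro H. apply (filter_imp (fun t => - (INR j + 1) < t < - INR j)).
  intros t Ht. unfold psiP. rewrite (idx_spec j t); auto; lra.
  apply loc_int; auto.
Qed.

Lemma loc_der F E P P1 j x : (forall j, sol F E (P j) (P1 j)) ->
  - (INR j + 1) < x < - INR j -> is_derive (psiP P) x (P1 j x).
Proof.
  intros Hs H. apply (is_derive_ext_loc (P j)). apply loc_eq; auto. apply Hs.
Qed.

Lemma loc_dd F E P P1 j x : (forall j, sol F E (P j) (P1 j)) ->
  - (INR j + 1) < x < - INR j -> is_derive (Derive (psiP P)) x (- (F * x + E) * P j x).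
Proof.
  intros Hs H. apply (is_derive_ext_loc (P1 j)).
  - apply (filter_imp (fun t => - (INR j + 1) < t < - INR j)).
    intros t Ht. symmetry. apply is_derive_unique. apply (loc_der F E P P1); auto.
    apply loc_int; auto.
  - apply Hs.
Qed.
Lemma at_int F E g P P1 j :
  (forall j, sol F E (P j) (P1 j)) ->
  (forall j, P (S j) (- INR (S j)) = P j (- INR (S j)) /\
     P1 j (- INR (S j)) - P1 (S j) (- INR (S j)) = g (- Z.of_nat (S j))%Z * P (S j) (- INR (S j))) ->
  let t := - INR (S j) in
  continuity_pt (psiP P) t /\
  filterlim (fun e => Derive (psiP P) (t + e) - Derive (psiP P) (t - e))
     (at_right 0) (locally (g (- Z.of_nat (S j))%Z * psiP P t)).
Proof.
  intros Hs HJ t. destruct (HJ j) as [J1 J2]. fold t in J1, J2.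
  assert (Ht : t = - (INR j + 1)) by (unfold t; rewrite S_INR; ring). clearbody t.
  assert (Hpt : psiP P t = P j t).
  { unfold psiP. rewrite (idx_spec j t). auto. lra. }
  split.
  - apply continuity_pt_filterlim. apply filterlim_locally. intro eps.
    assert (C1 : continuity_pt (P j) t) by (apply (cont_of_der (P j) (P1 j)); apply Hs).
    assert (C2 : continuity_pt (P (S j)) t) by (apply (cont_of_der (P (S j)) (P1 (S j))); apply Hs).
    apply continuity_pt_filterlim in C1. apply continuity_pt_filterlim in C2.
    apply filterlim_locally with (eps := eps) in C1.
    apply filterlim_locally with (eps := eps) in C2.
    assert (C3 : locally t (fun y => t - 1 < y < t + 1)).
    { exists (mkposreal 1 Rlt_0_1). intros y Hy.
      unfold ball in Hy; simpl in Hy; unfold AbsRing_ball, abs, minus, plus, opp in Hy; simpl in Hy.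
      apply Rabs_def2 in Hy. lra. }
    generalize (filter_and _ _ C1 (filter_and _ _ C2 C3)).
    apply filter_imp. intros y [Hy1 [Hy2 Hy3]]. rewrite Hpt.
    destruct (Rle_lt_dec t y) as [Hty|Hty].
    + unfold psiP. rewrite (idx_spec j y). exact Hy1. lra.
    + unfold psiP. rewrite (idx_spec (S j) y). rewrite <- J1. exact Hy2.
      rewrite S_INR. lra.
  - set (h := fun e => P1 j (t + e) - P1 (S j) (t - e)).
    apply (filterlim_ext_loc h).
    { exists (mkposreal 1 Rlt_0_1). intros e He Hpos. simpl in He.
      unfold ball in He; simpl in He; unfold AbsRing_ball, abs, minus, plus, opp in He; simpl in He.
      apply Rabs_def2 in He.
      unfold h. f_equal.
      - symmetry. apply is_derive_unique. apply (loc_der F E P P1 j); auto. lra.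
      - symmetry. apply is_derive_unique. apply (loc_der F E P P1 (S j)); auto.
        rewrite S_INR. lra. }
    assert (Hh0 : h 0 = g (- Z.of_nat (S j))%Z * psiP P t).
    { unfold h. rewrite Rplus_0_r, Rminus_0_r, Hpt, <- J1. exact J2. }
    rewrite <- Hh0.
    apply (filterlim_filter_le_1 (F := locally 0)).
    { intros Q [d Hd]. exists d. intros y Hy _. apply Hd; auto. }
    apply (@ex_derive_continuous R_AbsRing R_NormedModule h 0).
    unfold h. apply (ex_derive_minus (fun e => P1 j (t + e)) (fun e => P1 (S j) (t - e))).
    + apply (ex_derive_comp (P1 j) (fun e => t + e)). eexists; apply Hs.
      auto_derive; auto.
    + apply (ex_derive_comp (P1 (S j)) (fun e => t - e)). eexists; apply Hs.
      auto_derive; auto.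
Qed.
Lemma cont_neg F E g P P1 x :
  (forall j, sol F E (P j) (P1 j)) ->
  (forall j, P (S j) (- INR (S j)) = P j (- INR (S j)) /\
     P1 j (- INR (S j)) - P1 (S j) (- INR (S j)) = g (- Z.of_nat (S j))%Z * P (S j) (- INR (S j))) ->
  x < 0 -> continuous (psiP P) x.
Proof.
  intros Hs HJ Hx. destruct (idx_ex x Hx) as [j Hj].
  destruct (Req_dec x (- (INR j + 1))) as [He|Hne].
  - destruct (at_int F E g P P1 j Hs HJ) as [C _].
    replace (- INR (S j)) with x in C by (rewrite S_INR; lra).
    apply continuity_pt_filterlim. exact C.
  - apply (@ex_derive_continuous R_AbsRing R_NormedModule).
    eexists. apply (loc_der F E P P1 j x Hs). lra.
Qed.

Lemma cont_sq (f : R -> R) (x : R) : continuous f x -> continuous (fun y => f y ^ 2) x.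
Proof.
  intro H. apply (continuous_ext (fun y => mult (f y) (f y))).
  intro y. unfold mult; simpl. ring.
  apply (@continuous_mult R_UniformSpace R_AbsRing f f x); auto.
Qed.

Lemma quarter i : ((1 / 2) ^ i) ^ 2 <= exp (- INR i).
Proof.
  induction i as [|i IH]. simpl. rewrite Ropp_0, exp_0. lra.
  rewrite S_INR. replace (- (INR i + 1)) with (- INR i + - (1)) by ring.
  rewrite exp_plus. simpl in *.
  assert (He : / 3 <= exp (- (1))).
  { rewrite exp_Ropp. apply Rinv_le_contravar. apply exp_pos. apply exp_le_3. }
  assert (0 <= (1 / 2) ^ i) by (apply pow_le; lra).
  assert (0 < exp (- INR i)) by apply exp_pos.
  nra.
Qed.

Lemma L2_part F E g P P1 s :
  (forall j, sol F E (P j) (P1 j)) ->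
  (forall j, P (S j) (- INR (S j)) = P j (- INR (S j)) /\
     P1 j (- INR (S j)) - P1 (S j) (- INR (S j)) = g (- Z.of_nat (S j))%Z * P (S j) (- INR (S j))) ->
  (forall j, (S s <= j)%nat -> forall x, - (INR j + 1) <= x <= - INR j ->
      0 <= P j x <= (1 / 2) ^ (j - S s)) ->
  L2_neg_halfline (psiP P).
Proof.
  intros Hs HJ Hb.
  set (f2 := fun x => psiP P x ^ 2).
  assert (Hc : forall x, x < 0 -> continuous f2 x).
  { intros x Hx. apply cont_sq. apply (cont_neg F E g P P1); auto. }
  assert (Hex : forall a b, a < 0 -> b < 0 -> ex_RInt f2 a b).
  { intros a b Ha Hb'. apply (ex_RInt_continuous (V := R_CompleteNormedModule)). intros z Hz. apply Hc.
    assert (Rmax a b < 0) by (apply Rmax_lub_lt; auto). lra. }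
  set (b0 := - (INR (S s) + 1)).
  assert (Hb0 : b0 <= - 2) by (unfold b0; rewrite S_INR; pose proof (pos_INR s); lra).
  set (D := exp (INR (S s) + 1)).
  assert (Hbd : forall x, x <= b0 -> f2 x <= D * exp x).
  { intros x Hx. destruct (idx_ex x ltac:(lra)) as [j Hj].
    assert (HjS : (S s <= j)%nat).
    { apply INR_le. unfold b0 in Hx. lra. }
    unfold f2, psiP. rewrite (idx_spec j x Hj).
    destruct (Hb j HjS x ltac:(lra)) as [H1 H2].
    set (i := (j - S s)%nat) in *.
    assert (Hji : INR j = INR i + INR (S s)) by (rewrite <- plus_INR; f_equal; unfold i; lia).
    apply Rle_trans with (((1 / 2) ^ i) ^ 2).
    { apply pow_incr. lra. }
    apply Rle_trans with (exp (- INR i)). apply quarter.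
    unfold D. rewrite <- exp_plus.
    destruct (Req_dec (- INR i) (INR (S s) + 1 + x)) as [Heq|Hneq].
    rewrite Heq; lra. left. apply exp_increasing. lra. }
  set (H := fun a => RInt f2 a b0).
  assert (Hmono : forall a a', a <= a' -> a' <= b0 -> H a' <= H a).
  { intros a a' Ha Ha'. unfold H. rewrite <- (RInt_Chasles f2 a a' b0).
    - change (plus (RInt f2 a a') (RInt f2 a' b0)) with (RInt f2 a a' + RInt f2 a' b0).
      assert (0 <= RInt f2 a a').
      { apply RInt_ge_0; auto. apply Hex; lra. intros x _. unfold f2. apply pow2_ge_0. }
      lra.
    - apply Hex; lra.
    - apply Hex; lra. }
  assert (Hbound : forall a, a <= b0 -> H a <= D * exp b0).
  { intros a Ha. unfold H.
    assert (HI : is_RInt (fun x => D * exp x) a b0 (minus (D * exp b0) (D * exp a))).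
    { apply (is_RInt_derive (fun x => D * exp x)).
      - intros x _. auto_derive; auto. ring.
      - intros x _. apply (@ex_derive_continuous R_AbsRing R_NormedModule). auto_derive; auto. }
    apply Rle_trans with (RInt (fun x => D * exp x) a b0).
    - apply RInt_le; auto. apply Hex; lra. eexists; eauto. intros x Hx. apply Hbd. lra.
    - rewrite (is_RInt_unique _ _ _ _ HI). unfold minus, plus, opp; simpl.
      assert (0 < D * exp a) by (apply Rmult_lt_0_compat; apply exp_pos). lra. }
  destruct (completeness (fun v => exists a, a <= b0 /\ v = H a)) as [L [HL1 HL2]].
  { exists (D * exp b0). intros v [a [Ha ->]]. apply Hbound; auto. }
  { exists (H b0). exists b0. split; lra. }
  set (K := fun x => RInt f2 b0 x).
  assert (HKd : forall x, x < 0 -> is_derive K x (f2 x)).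
  { intros x Hx. apply (is_derive_RInt f2 K b0).
    - apply (filter_imp (fun y => y < 0)).
      intros y Hy. apply (RInt_correct (V := R_CompleteNormedModule)). apply Hex; lra.
      assert (Hd : 0 < - x / 2) by lra. exists (mkposreal _ Hd). intros y Hy. simpl in Hy.
      unfold ball in Hy; simpl in Hy; unfold AbsRing_ball, abs, minus, plus, opp in Hy; simpl in Hy.
      apply Rabs_def2 in Hy. lra.
    - apply Hc; auto. }
  assert (Hlim1 : filterlim K (Rbar_locally m_infty) (locally (- L))).
  { apply filterlim_locally. intro eps.
    assert (Hex0 : exists a0, a0 <= b0 /\ L - eps < H a0).
    { apply NNPP. intro Hn. assert (L <= L - eps).
      { apply HL2. intros v [a [Ha ->]]. destruct (Rle_lt_dec (H a) (L - eps)) as [h|h]; auto.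
        exfalso. apply Hn. exists a. split; auto. }
      destruct eps; simpl in *; lra. }
    destruct Hex0 as [a0 [Ha0 Ha0']].
    exists a0. intros a Ha. unfold ball; simpl; unfold AbsRing_ball, abs, minus, plus, opp; simpl.
    assert (HKa : K a = - H a).
    { unfold K, H. rewrite <- opp_RInt_swap. reflexivity. apply Hex; lra. }
    rewrite HKa.
    assert (H a0 <= H a) by (apply Hmono; lra).
    assert (H a <= L) by (apply HL1; exists a; split; lra).
    apply Rabs_def1; lra. }
  set (Q := fun x => RInt (fun y => P 0%nat y ^ 2) (-1) x).
  assert (HP0c : forall y, continuous (fun y => P 0%nat y ^ 2) y).
  { intro y. apply (cont_sq (P 0%nat)). destruct (Hs 0%nat y) as [H1 _].
    apply (@ex_derive_continuous R_AbsRing R_NormedModule (P 0%nat) y). exists (P1 0%nat y). exact H1. }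
  assert (HQd : forall x, is_derive Q x (P 0%nat x ^ 2)).
  { intro x. apply (is_derive_RInt (fun y => P 0%nat y ^ 2) Q (-1)).
    - apply filter_forall. intro y. apply (RInt_correct (V := R_CompleteNormedModule)). apply (ex_RInt_continuous (V := R_CompleteNormedModule)). intros; apply HP0c.
    - apply HP0c. }
  set (C0 := RInt f2 b0 (-1)).
  assert (Hlim2 : filterlim K (at_left 0) (locally (C0 + Q 0))).
  { apply (filterlim_ext_loc (fun x => C0 + Q x)).
    { exists (mkposreal 1 Rlt_0_1). intros y Hy Hy0. simpl in Hy.
      unfold ball in Hy; simpl in Hy; unfold AbsRing_ball, abs, minus, plus, opp in Hy; simpl in Hy.
      apply Rabs_def2 in Hy.
      unfold K, C0, Q. rewrite <- (RInt_Chasles f2 b0 (-1) y).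
      change (plus (RInt f2 b0 (-1)) (RInt f2 (-1) y)) with (RInt f2 b0 (-1) + RInt f2 (-1) y).
      f_equal. apply RInt_ext. intros z Hz.
      rewrite Rmin_left in Hz by lra. rewrite Rmax_right in Hz by lra.
      unfold f2, psiP. rewrite (idx_spec 0 z). reflexivity. simpl. lra.
      apply Hex; lra. apply Hex; lra. }
    apply (filterlim_filter_le_1 (F := locally 0)).
    { intros R0 [d Hd]. exists d. intros y Hy _. apply Hd; auto. }
    apply (@ex_derive_continuous R_AbsRing R_NormedModule (fun x => C0 + Q x) 0).
    apply (ex_derive_plus (fun _ => C0) Q). apply ex_derive_const. eexists; apply HQd. }
  assert (HG : is_RInt_gen (Derive K) (Rbar_locally m_infty) (at_left 0) (C0 + Q 0 - - L)).
  { apply is_RInt_gen_Derive.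
    - apply Filter_prod with (fun a => a < 0) (fun b => b < 0).
      exists 0. auto. exists (mkposreal 1 Rlt_0_1). intros; auto.
      intros a b Ha Hb' x Hx. simpl in Hx. eexists. apply HKd.
      assert (Rmax a b < 0) by (apply Rmax_lub_lt; auto). lra.
    - apply Filter_prod with (fun a => a < 0) (fun b => b < 0).
      exists 0. auto. exists (mkposreal 1 Rlt_0_1). intros; auto.
      intros a b Ha Hb' x Hx. simpl in Hx.
      assert (Hx0 : x < 0) by (assert (Rmax a b < 0) by (apply Rmax_lub_lt; auto); lra).
      apply (continuous_ext_loc _ f2).
      apply (filter_imp (fun y => y < 0)).
      intros y Hy. symmetry. apply is_derive_unique. apply HKd; auto.
      assert (Hd : 0 < - x / 2) by lra. exists (mkposreal _ Hd). intros y Hy. simpl in Hy.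
      unfold ball in Hy; simpl in Hy; unfold AbsRing_ball, abs, minus, plus, opp in Hy; simpl in Hy.
      apply Rabs_def2 in Hy. lra.
      apply Hc; auto.
    - exact Hlim1.
    - exact Hlim2. }
  unfold L2_neg_halfline. fold f2.
  apply (ex_RInt_gen_ext (Derive K)).
  - apply Filter_prod with (fun a => a < 0) (fun b => b < 0).
    exists 0. auto. exists (mkposreal 1 Rlt_0_1). intros; auto.
    intros a b Ha Hb' x Hx. simpl in Hx. apply is_derive_unique. apply HKd.
    assert (Rmax a b < 0) by (apply Rmax_lub_lt; auto). lra.
  - eexists; eauto.
Qed.
Theorem lemma2p2 (F : R) (g : Z -> R)
  (HF : 0 < F)
  (Hg : Rbar_lt (Finite (- sqrt F)) (LimInf_seq (scaled_seq g))) :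
  forall E : R,
  exists psi : R -> R,
    L2_neg_halfline psi /\
    (exists x, x < 0 /\ psi x <> 0) /\
    (forall x, x < 0 -> not_integer x ->
       ex_derive psi x /\ ex_derive_n psi 2 x /\
       - Derive_n psi 2 x - F * x * psi x = E * psi x) /\
    (forall n : Z, (n < 0)%Z ->
       continuity_pt psi (IZR n) /\
       filterlim (fun eps => Derive psi (IZR n + eps) - Derive psi (IZR n - eps))
         (at_right 0) (locally (g n * psi (IZR n)))).
Proof.
  intro E.
  destruct (construct F E g HF Hg) as [c [s [H1 Hb]]].
  set (P := Pc F E g c). set (P1 := P1c F E g c).
  assert (Hs : forall j, sol F E (P j) (P1 j)) by (intro j; apply Pc_sol).
  assert (HJ : forall j, P (S j) (- INR (S j)) = P j (- INR (S j)) /\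
     P1 j (- INR (S j)) - P1 (S j) (- INR (S j)) = g (- Z.of_nat (S j))%Z * P (S j) (- INR (S j))).
  { intro j. exact (junction F E g c j). }
  exists (psiP P).
  split; [|split; [|split]].
  - apply (L2_part F E g P P1 s Hs HJ Hb).
  - exists (- INR (S s)). split. pose proof (lt_0_INR (S s) ltac:(lia)); lra.
    unfold psiP. rewrite (idx_spec s). destruct (HJ s) as [J1 _]. fold P in H1. rewrite <- J1, H1. lra.
    rewrite S_INR. lra.
  - intros x Hx Hni. destruct (idx_ex x Hx) as [j Hj].
    assert (Hne : x <> - (INR j + 1)).
    { intro He. apply (Hni (- (Z.of_nat j + 1))%Z). rewrite He, opp_IZR, plus_IZR, <- INR_IZR_INZ. reflexivity. }
    assert (Hj' : - (INR j + 1) < x < - INR j) by lra.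
    assert (Hd1 := loc_der F E P P1 j x Hs Hj').
    assert (Hd2 := loc_dd F E P P1 j x Hs Hj').
    split; [|split].
    + eexists; eauto.
    + change (ex_derive (Derive (psiP P)) x). eexists; eauto.
    + change (Derive_n (psiP P) 2 x) with (Derive (Derive (psiP P)) x).
      rewrite (is_derive_unique _ _ _ Hd2).
      unfold psiP. rewrite (idx_spec j x) by lra. ring.
  - intros n Hn.
    assert (Hm : exists j, n = (- Z.of_nat (S j))%Z).
    { exists (Z.to_nat (- n) - 1)%nat. rewrite Nat2Z.inj_succ, Nat2Z.inj_sub, Z2Nat.id; lia. }
    destruct Hm as [j ->].
    rewrite opp_IZR, <- INR_IZR_INZ.
    exact (at_int F E g P P1 j Hs HJ).
Qed.
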